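(* Let $\ell\ge1$ and let $C=(w_1,\dots,w_{2\ell+1})$ be a semi-valid tuple in $\Omega_n$ which is not $(i,2\ell+1)$-consecutive for any $i$. Then there exist $i$ and $k$ with $1\le k\le\ell$ such that $C$ is $(i,k)$-consecutive and both $C_{i,k,-1}$ and $C_{i,k,1}$ are semi-valid.
   Context: $\Omega_n=\{v_0,\dots,v_{n-1}\}$ with cyclic order $v_0<\dots<v_{n-1}<v_0$, indices of $v$ mod $n$. A tuple $C=(w_1,\dots,w_{2\ell+1})$ of distinct vertices is semi-valid if $w_1<w_3<\dots<w_{2\ell+1}<w_2<w_4<\dots<w_{2\ell}<w_1$ in clockwise cyclic order; indices of the $w$'s are mod $2\ell+1$. $C$ is $(i,k)$-consecutive if there is $j$ with $w_{i+2s}=v_{j+s}$ for all $0\le s<k$. In that case, for an integer $m$, $C_{i,k,m}$ is the tuple obtained from $C$ by replacing $w_{i+2s}$ with $v_{j+s+m}$ for $0\le s<k$ and keeping all other entries. *)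

(* Defs.v *)
From mathcomp Require Import all_boot all_order all_algebra.
Set Implicit Arguments. Unset Strict Implicit. Unset Printing Implicit Defensive.

(* Vertices of Omega_n: v_j is the ordinal j : 'I_n, cyclic order = increasing
   value, indices mod n.  A tuple C = (w_1,...,w_{2l+1}) is a
   (l.*2.+1).-tuple 'I_n; position p (0-based) holds w_{p+1}; positions are
   read mod 2l+1. *)

Definition vshift n (d : int) (x : 'I_n) : 'I_n :=
  match d with
  | Posz k => iter k (@ordS n) x
  | Negz k => iter k.+1 (@ord_pred n) x
  end.

Definition wat n l (C : (l.*2.+1).-tuple 'I_n) (p : nat) : 'I_n :=
  tnth C (inord (p %% l.*2.+1)).

Definition cyc_ordered n (s : seq 'I_n) : Prop :=
  exists r, sorted ltn (rot r (map val s)).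

(* w_1 < w_3 < ... < w_{2l+1} < w_2 < w_4 < ... < w_{2l} < w_1, distinct *)
Definition semi_valid n l (C : (l.*2.+1).-tuple 'I_n) : Prop :=
  uniq C /\
  cyc_ordered ([seq wat C (2 * s) | s <- iota 0 l.+1] ++
               [seq wat C (2 * s + 1) | s <- iota 0 l]).

(* (i,k)-consecutive (i is the 0-based position of w_{i+1}) *)
Definition consecutive n l (C : (l.*2.+1).-tuple 'I_n) (i k : nat) : Prop :=
  exists j : 'I_n, forall s, s < k -> wat C (i + 2 * s) = vshift (Posz s) j.

(* C_{i,k,m}: the entries w_{i+2s} (0 <= s < k) equal v_{j+s}, and are
   replaced by v_{j+s+m} = vshift m (w_{i+2s}); other entries are kept. *)
Definition Cshift n l (C : (l.*2.+1).-tuple 'I_n) (i k : nat) (m : int)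
  : (l.*2.+1).-tuple 'I_n :=
  [tuple (if [exists s : 'I_k, (i + 2 * s) %% l.*2.+1 == p]
          then vshift m (tnth C p) else tnth C p) | p < l.*2.+1].

(* Main.v *)
Require Import Defs.
From mathcomp Require Import all_boot all_order all_algebra zify.
Set Implicit Arguments. Unset Strict Implicit. Unset Printing Implicit Defensive.

Lemma mono_of (H : nat -> nat) : (forall q, H q < H q.+1) ->
  forall p q, p < q -> H p < H q.
Proof. move=> Hi p q; exact: (homo_ltn (@ltn_trans) Hi). Qed.

Lemma monoW (H : nat -> nat) : (forall q, H q < H q.+1) ->
  forall p q, p <= q -> H p <= H q.
Proof.
move=> Hi p q; rewrite leq_eqVlt => /orP [/eqP -> //|/(mono_of Hi)]; exact: ltnW.
Qed.

Lemma lift_CO n N (h H : nat -> nat) c : 0 < N ->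
  (forall q, H q < H q.+1) -> (forall q, H (q + N) = H q + n) ->
  (forall q, H q %% n = h (c + q)) ->
  exists r, forall i, i.+1 < N -> h (r + i) < h (r + i).+1.
Proof.
move=> N0 Hi HN Hm.
have n0 : 0 < n.
  have := mono_of Hi N0; rewrite -(add0n N) HN; lia.
set M := H N %/ n * n.
have M1 : H 0 < M.
  have := ltn_ceil (H N) n0; rewrite mulSn -/M -(add0n N) HN; lia.
have M2 : M <= H N by exact: leq_divM.
have exP : exists q, M <= H q by exists N.
case: (ex_minnP exP) => r0 Hr0 Hmin.
have r0p : 0 < r0 by case: r0 Hr0 Hmin => //; rewrite leqNgt M1.
have r0N : r0 <= N by exact: Hmin.
have Hprev : H r0.-1 < M.
  rewrite ltnNge; apply/negP => /Hmin; lia.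
have rng i : i < N -> M <= H (r0 + i) < M + n.
  move=> iN; apply/andP; split.
    by apply: leq_trans Hr0 _; apply: monoW => //; lia.
  apply: (@leq_ltn_trans (H (r0.-1 + N))).
    by apply: monoW => //; lia.
  by rewrite HN; lia.
have Hmod i : i < N -> h (c + (r0 + i)) = H (r0 + i) - M.
  move=> iN; rewrite -Hm; have /andP [a b] := rng i iN.
  have -> : H (r0 + i) = H (r0 + i) %/ n * n - H (r0 + i) %/ n * n + (H N %/ n * n + (H (r0 + i) - M)) by rewrite -/M; lia.
  rewrite subnn add0n modnMDl modn_small; lia.
exists (c + r0) => i iN.
rewrite -addnA Hmod; last by lia.
rewrite -!addnS Hmod //.
have /andP [a _] := rng i (ltnW iN).
have := Hi (r0 + i); rewrite addnS; lia.
Qed.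

Lemma comb n N l (g : nat -> nat) : N = l.*2.+1 -> 1 <= l ->
  (forall t, g (t + N) = g t) -> (forall t, g t < n) ->
  (exists r, forall i, i.+1 < N -> g (r + i) < g (r + i).+1) ->
  (forall c, ~ (forall s, s < N -> g (c + s) = (g c + s) %% n)) ->
  exists c k (K : nat -> nat), [/\ 1 <= k <= l, forall q, K q < K q.+1,
     forall q, K (q + N) = K q + n, forall q, K q %% n = g (c + q) &
     [/\ forall s, s < k -> K s = K 0 + s, K k.-1 + 1 < K k & K N.-1 + 1 < K N]].
Proof.
move=> NE l1 gper glt [r Hr] notc.
have N0 : 0 < N by rewrite NE.
have [G GE] : {G : nat -> nat | forall q, G q = g (r + q) + n * (q %/ N)} by eexists.
have GN q : G (q + N) = G q + n.
  rewrite !GE addnA gper -{1}(mul1n N) divnDMl // mulnDr muln1; lia.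
have Gsmall q : q < N -> G q = g (r + q) by move=> qN; rewrite GE divn_small // muln0 addn0.
have Gmod q : G q %% n = g (r + q).
  by rewrite GE mulnC addnC modnMDl modn_small.
have GaN a b : G (b + a * N) = G b + a * n.
  elim: a => [|a IH]; first by rewrite !mul0n !addn0.
  have -> : b + a.+1 * N = (b + a * N) + N by rewrite mulSn; lia.
  by rewrite GN IH mulSn; lia.
have Ginc q : G q < G q.+1.
  have key x : x < N -> G x < G x.+1.
    move=> xN; case: (ltnP x.+1 N) => h.
      by rewrite !Gsmall // addnS Hr.
    have -> : x.+1 = 0 + N by lia.
    rewrite GN (Gsmall x) // (Gsmall 0) //; have := glt (r + x); lia.
  have -> : q = q %% N + q %/ N * N by rewrite addnC -divn_eq.
  by rewrite (GaN (q %/ N) (q %% N)) -addSn (GaN (q %/ N) (q %% N).+1) ltn_add2r key // ltn_pmod.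
have [big bigE] : {big : nat -> bool | forall q, big q = (G q + 1 < G q.+1)} by eexists.
have bigN q : big (q + N) = big q.
  by rewrite !bigE -(addSn q N) !GN addnAC ltn_add2r.
have run c L : (forall e, e.+1 < L -> ~~ big (c + e)) -> forall s, s < L -> G (c + s) = G c + s.
  move=> nb; elim=> [|s IH] sL; first by rewrite !addn0.
  have h1 := nb s sL; rewrite bigE -leqNgt in h1.
  have h2 := Ginc (c + s).
  rewrite IH in h1 h2; last by lia.
  rewrite addnS; lia.
have runG c : (forall e, e.+1 < N -> ~~ big (c + e)) -> forall s, s < N -> g (r + c + s) = (g (r + c) + s) %% n.
  move=> nb s sN; rewrite -!addnA -!Gmod (run c N nb s sN) -modnDml //.
have [p pN bp] : exists2 p, p < N & big p.
  case: (boolP (has big (iota 0 N))) => [/hasP [p] | /hasPn nb].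
    by rewrite mem_iota add0n => /andP [_ pN] bp; exists p.
  exfalso; apply: (notc (r + 0)) => s sN; apply: runG => // e eN.
  by rewrite add0n; apply: nb; rewrite mem_iota; lia.
have [e eN be] : exists2 e, e < N.-1 & big (p.+1 + e).
  case: (boolP (has (fun e => big (p.+1 + e)) (iota 0 N.-1))) => [/hasP [e] | /hasPn nb].
    by rewrite mem_iota add0n => /andP [_ eN] be; exists e.
  exfalso; apply: (notc (r + p.+1)) => s sN; apply: runG => // e' eN.
  by apply: nb; rewrite mem_iota; lia.
pose P d := (0 < d) && has (fun a => big a && big (a + d)) (iota 0 (N + N)).
have P1 : P e.+1.
  apply/andP; split => //; apply/hasP; exists p; first by rewrite mem_iota; lia.
  by rewrite bp -addSnnS.
have P2 : P (N - e.+1).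
  apply/andP; split; first lia.
  apply/hasP; exists (p.+1 + e); first by rewrite mem_iota; lia.
  rewrite be /=; have -> : p.+1 + e + (N - e.+1) = p + N by lia.
  by rewrite bigN.
have exP : exists d, P d by exists e.+1.
case: (ex_minnP exP) => k /andP [k0 /hasP [a aN /andP [ba bak]]] kmin.
have k1 := kmin _ P1; have k2 := kmin _ P2.
have nbig e' : 0 < e' < k -> ~~ big (a + e').
  move=> /andP [e0 ek]; apply/negP => bae.
  have : P e'.
    apply/andP; split => //; apply/hasP; exists a; last by rewrite ba.
    exact: aN.
  by move/kmin; lia.
exists (r + a.+1), k, (fun q => G (a.+1 + q)); split.
- apply/andP; split => //; rewrite NE in k1 k2; lia.
- by move=> q; rewrite addnS.
- by move=> q; rewrite addnA GN.
- by move=> q; rewrite Gmod addnA.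
split.
- move=> s sk; rewrite addn0; apply: (run _ k) => // e' ek.
  rewrite addSnnS; apply: nbig; lia.
- have -> : a.+1 + k.-1 = a + k by lia.
  by rewrite addSn -bigE.
- have -> : a.+1 + N.-1 = a + N by lia.
  by rewrite addSn -bigE bigN.
Qed.

Lemma mod2inj l x y : 2 * x = 2 * y %[mod l.*2.+1] -> x = y %[mod l.*2.+1].
Proof.
move=> E.
have K z : z %% l.*2.+1 = ((2 * z) %% l.*2.+1 * l.+1) %% l.*2.+1.
  rewrite modnMml.
  have -> : 2 * z * l.+1 = z * l.*2.+1 + z by lia.
  by rewrite modnMDl.
by rewrite K E -K.
Qed.

Lemma watE n l (X : (l.*2.+1).-tuple 'I_n) t :
  wat X (2 * t) = wat X (2 * (t %% l.*2.+1)).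
Proof. by rewrite /wat modnMmr. Qed.

Lemma watP n l (X : (l.*2.+1).-tuple 'I_n) t :
  wat X (2 * (t + l.*2.+1)) = wat X (2 * t).
Proof. by rewrite watE [in RHS]watE modnDr. Qed.

Lemma sv_list n l (X : (l.*2.+1).-tuple 'I_n) :
  [seq wat X (2 * s) | s <- iota 0 l.+1] ++ [seq wat X (2 * s + 1) | s <- iota 0 l]
  = [seq wat X (2 * t) | t <- iota 0 l.*2.+1].
Proof.
have -> : l.*2.+1 = l.+1 + l by lia.
rewrite iotaD map_cat.
have -> : iota (0 + l.+1) l = [seq l.+1 + i | i <- iota 0 l] by rewrite -iotaDl addn0.
rewrite -map_comp; congr (_ ++ _).
apply: eq_map => s /=; rewrite /wat.
rewrite -(modnDr (2 * s + 1)); do 3 f_equal; lia.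
Qed.

Lemma rot_map_iota N (g : nat -> nat) r : r <= N -> (forall t, g (t + N) = g t) ->
  rot r [seq g t | t <- iota 0 N] = [seq g (r + i) | i <- iota 0 N].
Proof.
move=> rN gp; rewrite /rot -map_drop -map_take drop_iota take_iota add0n.
have -> : minn r N = r by lia.
have E : N = (N - r) + r by lia.
rewrite {2}E iotaD map_cat; congr (_ ++ _).
  have -> : iota r (N - r) = map (addn r) (iota 0 (N - r)) by rewrite -iotaDl addn0.
  by rewrite -map_comp.
have -> : iota (0 + (N - r)) r = map (addn (N - r)) (iota 0 r) by rewrite -iotaDl addn0.
rewrite -map_comp; apply: eq_map => i /=.
by rewrite -(gp i); congr g; lia.
Qed.

Lemma co_iff n N (F : nat -> 'I_n) : (forall t, F (t + N) = F t) -> 0 < N ->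
  cyc_ordered [seq F t | t <- iota 0 N] <->
  exists r, forall i, i.+1 < N -> val (F (r + i)) < val (F (r + i).+1).
Proof.
move=> Fp N0.
have gp : forall t, (val \o F) (t + N) = (val \o F) t by move=> t /=; rewrite Fp.
have Fm t : F t = F (t %% N).
  rewrite {1}(divn_eq t N) addnC; elim: (t %/ N) => [|a IH]; first by rewrite mul0n addn0.
  by rewrite mulSn (addnC N) addnA Fp.
rewrite /cyc_ordered -map_comp; split.
  move=> [r]; case: (leqP r N) => rN; last first.
    rewrite rot_oversize ?size_map ?size_iota; last by lia.
    move=> /(sortedP 0) H; exists 0 => i iN.
    have := H i; rewrite size_map size_iota => /(_ iN).
    by rewrite !(nth_map 0) ?size_iota ?nth_iota //; lia.
  rewrite rot_map_iota // => /(sortedP 0) H; exists r => i iN.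
  have := H i; rewrite size_map size_iota => /(_ iN).
  rewrite !(nth_map 0) ?size_iota ?nth_iota //= ?add0n ?addnS //; lia.
move=> [r H]; exists (r %% N).
rewrite rot_map_iota //; last by apply: ltnW; rewrite ltn_pmod.
apply/(sortedP 0) => i; rewrite size_map size_iota => iN.
rewrite !(nth_map 0) ?size_iota ?nth_iota //= ?add0n; try lia.
rewrite (Fm (r %% N + i)) (Fm (r %% N + i.+1)) !modnDml -!Fm addnS.
exact: H.
Qed.

Lemma uniq_of n l (X : (l.*2.+1).-tuple 'I_n) :
  (exists r, forall i, i.+1 < l.*2.+1 ->
      val (wat X (2 * (r + i))) < val (wat X (2 * (r + i).+1))) -> uniq X.
Proof.
move=> [r H].
have N0 : 0 < l.*2.+1 by [].
have mono d i : i + d.+1 < l.*2.+1 ->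
    val (wat X (2 * (r + i))) < val (wat X (2 * (r + (i + d.+1)))).
  elim: d => [|d IH] idN; first by rewrite addn1 addnS; apply: H; lia.
  apply: ltn_trans (IH _) _; first by lia.
  rewrite (addnS i d.+1) (addnS r (i + d.+1)); apply: H; lia.
have claim x : (r + (x + (l.*2.+1 - r %% l.*2.+1)) %% l.*2.+1) %% l.*2.+1 = x %% l.*2.+1.
  rewrite modnDmr {1}(divn_eq r l.*2.+1).
  have := ltn_pmod r N0 => hr.
  have -> : r %/ l.*2.+1 * l.*2.+1 + r %% l.*2.+1 + (x + (l.*2.+1 - r %% l.*2.+1))
     = r %/ l.*2.+1 * l.*2.+1 + (x + l.*2.+1) by lia.
  by rewrite modnMDl modnDr.
have inj x y : val (wat X (2 * x)) = val (wat X (2 * y)) -> x %% l.*2.+1 = y %% l.*2.+1.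
  set ix := (x + (l.*2.+1 - r %% l.*2.+1)) %% l.*2.+1.
  set iy := (y + (l.*2.+1 - r %% l.*2.+1)) %% l.*2.+1.
  have ixN : ix < l.*2.+1 by rewrite ltn_pmod.
  have iyN : iy < l.*2.+1 by rewrite ltn_pmod.
  rewrite (watE X x) (watE X y) -(claim x) -(claim y) -/ix -/iy -!watE => E.
  suff -> : ix = iy by [].
  case: (ltngtP ix iy) => // h.
    have := mono (iy - ix).-1 ix.
    have -> : ix + (iy - ix).-1.+1 = iy by lia.
    by rewrite E ltnn => /(_ iyN).
  have := mono (ix - iy).-1 iy.
  have -> : iy + (ix - iy).-1.+1 = ix by lia.
  by rewrite E ltnn => /(_ ixN).
apply/tuple_uniqP => p1 p2 E.
pose t (p : nat) := if odd p then (p + l.*2.+1)./2 else p./2.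
have tpv p : p < l.*2.+1 -> (2 * t p) %% l.*2.+1 = p.
  move=> pN; rewrite /t.
  have oN : odd (l.*2.+1) by rewrite /= odd_double.
  case op : (odd p).
    have := odd_double_half (p + l.*2.+1); rewrite oddD op oN /= add0n -muln2 mulnC => ->.
    by rewrite modnDr modn_small.
  have := odd_double_half p; rewrite op add0n -muln2 mulnC => ->.
  by rewrite modn_small.
have tp (p : 'I_(l.*2.+1)) : tnth X p = wat X (2 * t p).
  by rewrite /wat tpv // inord_val.
have := congr1 val E; rewrite !tp => /inj E2.
apply: val_inj.
have := congr1 (fun z => (2 * z) %% l.*2.+1) E2; rewrite /= !modnMmr !tpv //.
Qed.

Lemma vshiftP n s (j : 'I_n) : val (vshift (Posz s) j) = (j + s) %% n.
Proof.
elim: s => [|s IH]; first by rewrite addn0 modn_small.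
rewrite /= in IH.
have -> : val (vshift (Posz s.+1) j) = (nat_of_ord (iter s (@ordS n) j)).+1 %% n by [].
by rewrite IH -addn1 modnDml addn1 addnS.
Qed.

Lemma Cshift_wat n l (C : (l.*2.+1).-tuple 'I_n) c k m q : k < l.*2.+1 ->
  wat (Cshift C (2 * c) k m) (2 * (c + q)) =
  if q %% l.*2.+1 < k then vshift m (wat C (2 * (c + q))) else wat C (2 * (c + q)).
Proof.
move=> kN; rewrite /wat /Cshift tnth_mktuple inordK ?ltn_pmod //.
have -> : [exists s : 'I_k, (2 * c + 2 * s) %% l.*2.+1 == (2 * (c + q)) %% l.*2.+1]
          = (q %% l.*2.+1 < k).
  apply/existsP/idP.
    move=> [s /eqP hs]; rewrite -mulnDr in hs.
    have /eqP := mod2inj hs; rewrite eqn_modDl => /eqP <-.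
    by rewrite modn_small //; apply: ltn_trans kN.
  move=> h; exists (Ordinal h); apply/eqP.
  by rewrite /= -mulnDr -modnMmr modnDmr modnMmr.
by [].
Qed.

Lemma sv_of_lift n l (X : (l.*2.+1).-tuple 'I_n) (H : nat -> nat) c :
  (forall q, H q < H q.+1) -> (forall q, H (q + l.*2.+1) = H q + n) ->
  (forall q, H q %% n = val (wat X (2 * (c + q)))) -> semi_valid X.
Proof.
move=> Hi HN Hm.
have := @lift_CO n l.*2.+1 (fun t => val (wat X (2 * t))) H c (ltn0Sn _) Hi HN Hm.
move=> hr; split; first exact: uniq_of.
rewrite /semi_valid sv_list.
apply/(co_iff (F := fun t => wat X (2 * t))) => //.
by move=> t; rewrite watP.
Qed.

Theorem lemma3p8 (n l : nat) (C : (l.*2.+1).-tuple 'I_n) :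
  1 <= l ->
  semi_valid C ->
  (forall i, ~ consecutive C i l.*2.+1) ->
  exists i k, [/\ 1 <= k <= l, consecutive C i k,
                  semi_valid (Cshift C i k (-1)%R) &
                  semi_valid (Cshift C i k 1%R)].
Proof.
move=> l1 [uC coC] notc.
have n0 : 0 < n by have := ltn_ord (tnth C ord0); lia.
have N0 : 0 < l.*2.+1 by [].
pose g t := val (wat C (2 * t)).
have hr : exists r, forall i, i.+1 < l.*2.+1 -> g (r + i) < g (r + i).+1.
  move: coC; rewrite sv_list (co_iff (F := fun t => wat C (2 * t))) //.
  by move=> t; rewrite watP.
have notcons : forall c, ~ (forall s, s < l.*2.+1 -> g (c + s) = (g c + s) %% n).
  move=> c H; apply: (notc (2 * c)); exists (wat C (2 * c)) => s sN.
  by apply: val_inj; rewrite vshiftP -mulnDr; exact: (H s sN).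
have gper t : g (t + l.*2.+1) = g t by rewrite /g watP.
have glt t : g t < n by exact: ltn_ord.
have [c [k [K [kl Kinc KN Kmod [Krun Kgap1 Kgap2]]]]] :=
  comb (erefl (l.*2.+1)) l1 gper glt hr notcons.
have Kmod' q : K q %% n = val (wat C (2 * (c + q))) := Kmod q.
have kN : k < l.*2.+1 by lia.
have Kmod'' q : K q %% n = nat_of_ord (wat C (2 * (c + q))) := Kmod q.
have KaN a b : K (b + a * l.*2.+1) = K b + a * n.
  elim: a => [|a IH]; first by rewrite !mul0n !addn0.
  have -> : b + a.+1 * l.*2.+1 = (b + a * l.*2.+1) + l.*2.+1 by rewrite mulSn; lia.
  by rewrite KN IH mulSn; lia.
have Kgap q : (q %% l.*2.+1 < k) != (q.+1 %% l.*2.+1 < k) -> K q + 1 < K q.+1.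
  move: (divn_eq q l.*2.+1) (ltn_pmod q N0).
  set x := q %% l.*2.+1; set a := q %/ l.*2.+1 => qe xN.
  have qs : q.+1 %% l.*2.+1 = if x.+1 == l.*2.+1 then 0 else x.+1.
    rewrite qe -addnS modnMDl; case: eqP => [->|ne]; first by rewrite modnn.
    by rewrite modn_small //; lia.
  rewrite qs; clearbody x a.
  have -> : q.+1 = x.+1 + a * l.*2.+1 by lia.
  rewrite qe (addnC (a * _) x) !KaN.
  case E1: (x.+1 == l.*2.+1).
    move/eqP: E1 => e.
    have xe : (l.*2.+1).-1 = x by lia.
    rewrite e; move=> _.
    have := Kgap2; rewrite xe; lia.
  move=> hb.
  have xk : x.+1 = k by move: hb; case: ltnP; case: ltnP => //= ? ?; lia.
  have := Kgap1; rewrite -xk /=; lia.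
exists (2 * c), k; split => //.
- exists (wat C (2 * c)) => s sk; apply: val_inj; rewrite vshiftP -mulnDr.
  have h0 := Kmod' 0; rewrite addn0 in h0.
  have hs := Kmod' s; rewrite Krun // in hs.
  by rewrite -hs -h0 modnDml.
- apply: (@sv_of_lift _ _ _ (fun q => K q + n - (q %% l.*2.+1 < k)) c).
  + move=> q /=; have := Kinc q; have := Kgap q.
    case: (q %% l.*2.+1 < k); case: (q.+1 %% l.*2.+1 < k) => /=; lia.
  + move=> q /=; rewrite modnDr KN; lia.
  + move=> q /=; rewrite Cshift_wat //; case: (q %% l.*2.+1 < k) => /=.
      rewrite -Kmod''; move: (divn_eq (K q) n) (ltn_pmod (K q) n0) => E hy.
      rewrite [in LHS]E.
      have -> : K q %/ n * n + K q %% n + n - 1 = K q %/ n * n + (K q %% n + n).-1 by lia.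
      by rewrite modnMDl.
    by rewrite subn0 modnDr Kmod''.
- apply: (@sv_of_lift _ _ _ (fun q => K q + (q %% l.*2.+1 < k)) c).
  + move=> q /=; have := Kinc q; have := Kgap q.
    case: (q %% l.*2.+1 < k); case: (q.+1 %% l.*2.+1 < k) => /=; lia.
  + move=> q /=; rewrite modnDr KN; lia.
  + move=> q /=; rewrite Cshift_wat //; case: (q %% l.*2.+1 < k) => /=.
      by rewrite -Kmod'' -[(K q %% n).+1]addn1 modnDml.
    by rewrite addn0 Kmod''.
Qed.
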